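(* Let $G\in\mathcal S$, with $b_r$ defined either for (bond-)interfaces or for site-interfaces. Then $r\mapsto b_r(G)$ is an upper-semicontinuous function of $r$.
   Context: Interfaces. Let $G$ be an infinite, connected, locally finite, 1-ended, 2-connected graph with a vertex $o$ and a fixed basis $\mathcal P$ of its cycle space over $\mathbb Z_2$. Each edge $vw$ has directions $\vec{vw},\vec{wv}$; for $F\subseteq E(G)$ and subgraph $D$, $\vec F_D=\{\vec{vz}: vz\in F, z\in V(D)\}$. A $\mathcal P$-path connecting $\vec{vw},\vec{yx}$ is a path $Q$ with endvertices $w,y$ (possibly $w=y$) such that the path with edge set $E(Q)\cup\{vw,yx\}$ is a subpath of a cycle in $\mathcal P$; it connects an edge $e$ to a set $J$ if it connects a direction of $e$ to an element of $J$. $J$ is $F$-connected if for every partition into non-empty $J_1,J_2$ some $\mathcal P$-path in $G\setminus F$ connects an element of $J_1$ to one of $J_2$. An interface is a pair $(P,\partial P)$ of edge sets with: (i) $\partial P$ separates $o$ from infinity; (ii) a unique finite component $D$ of $G\setminus\partial P$ contains an endvertex of each edge of $\partial P$; (iii) $\vec{\partial P}_D$ is $\partial P$-connected; (iv) $P$ is the set of $e\in E(D)$ connected to $\vec{\partial P}_D$ by a $\mathcal P$-path in $G\setminus\partial P$. Sizes count edges. It is a site-interface if no edge of $\partial P$ has both endvertices in $V(P)$; then $P$ is identified with $V(P)$ and $\partial P$ with the vertices incident with an edge of $\partial P$ but no edge of $P$, and sizes count vertices. The class $\mathcal S$ (with fixed $\mathcal P$): (a) quasi-transitive planar lattices (2-connected,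 locally finite, connected graphs embedded in $\mathbb R^2$ preserved by translations by two linearly independent vectors, with finitely many vertex orbits), $\mathcal P$ = face-boundary cycles; (b) $\mathbb Z^d$, $d\ge2$, $\mathcal P$ = 4-cycles bounding square faces of unit cubes; (c) $\mathbb T^d$, $d\ge2$: $\mathbb Z^d$ plus edges $xy$ with $y_i-x_i=1$ for exactly two coordinates and $y_i=x_i$ otherwise, $\mathcal P$ = resulting triangles. $c_{n,r,\epsilon}$ is the number of (bond- resp. site-) interfaces of $o$ with $|P|=n$ and $(r-\epsilon)n\le|\partial P|\le(r+\epsilon)n$; $b_r=\lim_{\epsilon\to0}\limsup_{n\to\infty}c_{n,r,\epsilon}^{1/n}$. *)

(* Defs.v *)
From HB Require Import structures.
From mathcomp Require Import all_boot all_order all_algebra.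
From mathcomp Require Import all_classical all_reals all_analysis.
From Stdlib Require Import Relation_Operators.
From Stdlib Require List.

Set Implicit Arguments.
Unset Strict Implicit.
Unset Printing Implicit Defensive.

Import Order.TTheory GRing.Theory Num.Theory numFieldNormedType.Exports.
Local Open Scope classical_set_scope.
Local Open Scope ring_scope.

(* Graphs.  A (simple) graph is a vertex type [V] with a symmetric,         *)
(* irreflexive adjacency relation [adj].  An (undirected) edge vw is the    *)
(* two-element vertex set [set v; w]; an edge set is a [set (set V)].        *)
(* A direction of the edge vw is an ordered pair (v, w) (tail, head).        *)

Definition edge (V : Type) (v w : V) : set V := [set v; w].

Definition is_edge (V : Type) (adj : V -> V -> Prop) : set (set V) :=
  [set e | exists v w, adj v w /\ e = edge v w].

Definition del (V : Type) (adj : V -> V -> Prop) (F : set (set V)) : V -> V -> Prop :=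
  fun v w => adj v w /\ ~ F (edge v w).

Fixpoint walk (V : Type) (a : V -> V -> Prop) (s : seq V) : Prop :=
  match s with
  | x :: ((y :: _) as t) => a x y /\ walk a t
  | _ => True
  end.

Fixpoint pedges (V : Type) (s : seq V) : set (set V) :=
  match s with
  | x :: ((y :: _) as t) => [set edge x y] `|` pedges t
  | _ => set0
  end.

Definition comp (V : Type) (a : V -> V -> Prop) (x : V) : set V :=
  [set y | clos_refl_trans V a x y].

Definition is_component (V : Type) (a : V -> V -> Prop) (D : set V) : Prop :=
  exists x, D = comp a x.

Definition is_cycle (V : Type) (adj : V -> V -> Prop) (C : set (set V)) : Prop :=
  exists (x : V) (t : seq V), (2 <= size t)%N /\ List.NoDup (x :: t) /\
    walk adj (x :: rcons t x) /\ C = pedges (x :: rcons t x).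

(* P-paths.  [Pc] is the fixed set of cycles (basis of the cycle space).     *)
(* [Ppath_conn adj Pc F d1 d2]: there is a P-path in G \ F connecting the   *)
(* directions d1 = (v, w) and d2 = (x, y): a path Q in G \ F from w to y     *)
(* such that v, Q, x is a path whose edge set (E(Q) + vw + yx) is contained *)
(* in some cycle of Pc.  (Both directions point towards the ends of Q, see  *)

Definition Ppath_conn (V : Type) (adj : V -> V -> Prop) (Pc : set (set (set V)))
    (F : set (set V)) (d1 d2 : V * V) : Prop :=
  exists Q' : seq V,
    let Q := d1.2 :: Q' in
    [/\ last d1.2 Q' = d2.2,
        walk (del adj F) Q,
        walk adj (d1.1 :: rcons Q d2.1),
        List.NoDup (d1.1 :: rcons Q d2.1) &
        exists2 C, Pc C & pedges (d1.1 :: rcons Q d2.1) `<=` C].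

Definition Fconnected (V : Type) (adj : V -> V -> Prop) (Pc : set (set (set V)))
    (F : set (set V)) (J : set (V * V)) : Prop :=
  forall J1 J2 : set (V * V),
    J1 `|` J2 = J -> J1 `&` J2 = set0 -> J1 !=set0 -> J2 !=set0 ->
    exists d1 d2, [/\ J1 d1, J2 d2 & Ppath_conn adj Pc F d1 d2].

Definition dirs_into (V : Type) (F : set (set V)) (D : set V) : set (V * V) :=
  [set d | F (edge d.1 d.2) /\ D d.2].

Definition edges_of (V : Type) (a : V -> V -> Prop) (D : set V) : set (set V) :=
  [set e | exists v w, [/\ a v w, D v, D w & e = edge v w]].

Definition meets_all (V : Type) (adj : V -> V -> Prop) (dP : set (set V)) (D : set V) :=
  [/\ is_component (del adj dP) D, finite_set D & forall e, dP e -> e `&` D !=set0].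

Definition is_interface (V : Type) (adj : V -> V -> Prop) (Pc : set (set (set V)))
    (o : V) (P dP : set (set V)) : Prop :=
  [/\ dP `<=` is_edge adj,
      (* (i) dP separates o from infinity *)
      finite_set (comp (del adj dP) o) &
      exists D : set V,
        [/\
            meets_all adj dP D,
            (forall D', meets_all adj dP D' -> D' = D),
            Fconnected adj Pc dP (dirs_into dP D) &
            P = [set e | edges_of (del adj dP) D e /\
                   exists v w d, [/\ e = edge v w, dirs_into dP D d &
                                     Ppath_conn adj Pc dP (v, w) d]]]].

Definition verts (V : Type) (F : set (set V)) : set V :=
  [set v | exists2 e, F e & e v].

Definition site_cond (V : Type) (P dP : set (set V)) : Prop :=
  forall e, dP e -> ~ (e `<=` verts P).

Definition vbound (V : Type) (P dP : set (set V)) : set V :=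
  verts dP `\` verts P.

Definition ecount (R : realType) (T : Type) (A : set T) : \bar R :=
  (\esum_(x in (A : set {classic T})) (1 : \bar R))%E.
Arguments ecount R {T} A.

Definition c_bond (R : realType) (V : Type) (adj : V -> V -> Prop)
    (Pc : set (set (set V))) (o : V) (n : nat) (r eps : R) : \bar R :=
  ecount R [set PP : set (set V) * set (set V) |
    [/\ is_interface adj Pc o PP.1 PP.2,
        ecount R PP.1 = (n%:R)%:E,
        (((r - eps) * n%:R)%:E <= ecount R PP.2)%E &
        (ecount R PP.2 <= ((r + eps) * n%:R)%:E)%E]].

(* c_{n,r,eps} for site-interfaces, identified with the pair (V(P), dP_V) *)
Definition c_site (R : realType) (V : Type) (adj : V -> V -> Prop)
    (Pc : set (set (set V))) (o : V) (n : nat) (r eps : R) : \bar R :=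
  ecount R [set SS : set V * set V |
    [/\ (exists P dP, [/\ is_interface adj Pc o P dP, site_cond P dP &
                          SS = (verts P, vbound P dP)]),
        ecount R SS.1 = (n%:R)%:E,
        (((r - eps) * n%:R)%:E <= ecount R SS.2)%E &
        (ecount R SS.2 <= ((r + eps) * n%:R)%:E)%E]].

Definition b_of (R : realType) (c : nat -> R -> R -> \bar R) (r : R) : \bar R :=
  lim ((fun eps : R => limn_esup (fun n : nat => poweR (c n r eps) (n%:R)^-1))
         @ 0^'+).

Definition b_bond (R : realType) (V : Type) (adj : V -> V -> Prop)
    (Pc : set (set (set V))) (o : V) : R -> \bar R :=
  b_of (c_bond adj Pc o).

Definition b_site (R : realType) (V : Type) (adj : V -> V -> Prop)
    (Pc : set (set (set V))) (o : V) : R -> \bar R :=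
  b_of (c_site adj Pc o).

Definition upper_semicontinuous (R : realType) (f : R -> \bar R) : Prop :=
  forall (x : R) (a : R), (f x < a%:E)%E -> \forall y \near x, (f y < a%:E)%E.

Definition addp (R : realType) (p q : R * R) : R * R := (p.1 + q.1, p.2 + q.2).

Definition unit01 (R : realType) : set R := [set t | 0 <= t <= 1].
Arguments unit01 : clear implicits.

Definition arc_img (R : realType) (g : R -> R * R) : set (R * R) := g @` (unit01 R).

Definition planar_lattice (R : realType) (V : Type) (adj : V -> V -> Prop)
    (Pc : set (set (set V))) : Prop :=
  [/\ (forall v w, adj v w -> adj w v) /\ (forall v, ~ adj v v),
      (forall x y, clos_refl_trans V adj x y),
      (forall v, finite_set (adj v)),
      (exists x y z : V, [/\ x <> y, y <> z & x <> z]) /\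
      (forall z x y, x <> z -> y <> z ->
         clos_refl_trans V (fun a b => [/\ adj a b, a <> z & b <> z]) x y) &
      (* embedded in R^2, preserved by two independent translations,     *)
      (* finitely many vertex orbits, Pc = the face-boundary cycles       *)
      exists (pos : V -> R * R) (arc : V -> V -> R -> R * R),
      let Gimg := pos @` setT `|`
                  [set p | exists v w, adj v w /\ arc_img (arc v w) p] in
      injective pos /\
          (forall v w, adj v w ->
             [/\ {within unit01 R, continuous (arc v w)},
                 set_inj (unit01 R) (arc v w),
                 arc v w 0 = pos v, arc v w 1 = pos w &
                 arc_img (arc v w) = arc_img (arc w v)]) /\
          (forall v w t u, adj v w -> 0 < t < 1 -> arc v w t <> pos u) /\
          (forall v w v' w', adj v w -> adj v' w' -> edge v w <> edge v' w' ->
             arc_img (arc v w) `&` arc_img (arc v' w') `<=`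
               pos @` (edge v w `&` edge v' w')) /\
          (exists (a b : R * R) (pa pb : V -> V),
             [/\ a.1 * b.2 - a.2 * b.1 != 0,
                 (forall (c : R * R) (p : V -> V), (c, p) = (a, pa) \/ (c, p) = (b, pb) ->
                    [/\ bijective p,
                        (forall v w, adj v w <-> adj (p v) (p w)),
                        (forall v, pos (p v) = addp (pos v) c) &
                        (forall v w, adj v w ->
                           arc_img (arc (p v) (p w)) = (fun q => addp q c) @` arc_img (arc v w))]) &
                 exists L : seq V, forall v, exists u, List.In u L /\
                   exists i j : int,
                     pos v = addp (pos u) (i%:~R * a.1 + j%:~R * b.1,
                                           i%:~R * a.2 + j%:~R * b.2)]) /\
          Pc = [set C | is_cycle adj C /\
                  exists x, ~ Gimg x /\
                    let Fc := connected_component (~` Gimg) x in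
                    closure Fc `\` interior Fc =
                    [set p | exists v w, [/\ adj v w, C (edge v w) &
                                             arc_img (arc v w) p]]]].

Definition zvec (d : nat) := 'I_d -> int.
Definition zunit (d : nat) (i : 'I_d) : zvec d := fun k => if k == i then 1 else 0.
Definition zadd (d : nat) (x y : zvec d) : zvec d := fun k => x k + y k.

Definition adjZ (d : nat) (x y : zvec d) : Prop :=
  exists i : 'I_d, (y i - x i = 1 \/ x i - y i = 1) /\ forall k, k != i -> y k = x k.

Definition cycZ (d : nat) : set (set (set (zvec d))) :=
  [set C | exists (x : zvec d) (i j : 'I_d), i != j /\
     let a := zadd x (zunit i) in
     let b := zadd x (zunit j) in
     let c := zadd a (zunit j) in
     C = [set edge x a; edge a c; edge c b; edge b x]].
Arguments cycZ : clear implicits.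

Definition adjT (d : nat) (x y : zvec d) : Prop :=
  adjZ x y \/
  exists i j : 'I_d, i != j /\
    ((y i - x i = 1 /\ y j - x j = 1 /\ forall k, k != i -> k != j -> y k = x k) \/
     (x i - y i = 1 /\ x j - y j = 1 /\ forall k, k != i -> k != j -> x k = y k)).

Definition cycT (d : nat) : set (set (set (zvec d))) :=
  [set C | exists (x : zvec d) (i j : 'I_d), i != j /\
     let a := zadd x (zunit i) in
     let c := zadd a (zunit j) in
     C = [set edge x a; edge a c; edge x c]].
Arguments cycT : clear implicits.

Record pgraph := PGraph {
  vtx : Type;
  gadj : vtx -> vtx -> Prop;
  gcyc : set (set (set vtx)) }.

Definition ZdG (d : nat) : pgraph := @PGraph (zvec d) (@adjZ d) (cycZ d).
Definition TdG (d : nat) : pgraph := @PGraph (zvec d) (@adjT d) (cycT d).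

Definition inS (R : realType) (G : pgraph) : Prop :=
  planar_lattice R (@gadj G) (@gcyc G) \/
  (exists d, (2 <= d)%N /\ G = ZdG d) \/
  (exists d, (2 <= d)%N /\ G = TdG d).
Arguments b_bond : clear implicits.
Arguments b_site : clear implicits.

(* Main.v *)
Require Import Defs.
From mathcomp Require Import all_boot all_order all_algebra.
From mathcomp Require Import all_classical all_reals all_analysis.
From mathcomp Require Import lra.
Import Order.TTheory GRing.Theory Num.Theory numFieldNormedType.Exports.
Local Open Scope classical_set_scope.
Local Open Scope ring_scope.

Section S.
Variable R : realType.

Lemma ecount_ge0 (T : Type) (A : set T) : (0 <= ecount R A)%E.
Proof. by apply: esum_ge0 => x _. Qed.

Lemma ecount_le (T : Type) (A B : set T) : A `<=` B -> (ecount R A <= ecount R B)%E.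
Proof.
move=> AB; rewrite /ecount.
have -> : (A : set {classic T}) = (B : set {classic T}) `&` A.
  by rewrite setIidr.
rewrite esum_mkcondr; apply: le_esum => i _.
by case: ifP.
Qed.

Definition gfun (c : nat -> R -> R -> \bar R) (r e : R) : \bar R :=
  limn_esup (fun n : nat => poweR (c n r e) (n%:R)^-1).

Lemma limn_esup_le (u v : (\bar R)^nat) : (forall n, (u n <= v n)%E) ->
  (limn_esup u <= limn_esup v)%E.
Proof.
move=> uv; rewrite !limn_esup_lim; apply: lee_lim.
- exact: is_cvg_esups.
- exact: is_cvg_esups.
apply: nearW => n /=.
apply: ge_ereal_sup => _ [k kn <-].
apply: le_trans (uv k) _.
by apply: ereal_sup_ubound; exists k.
Qed.

Lemma gfun_le (c : nat -> R -> R -> \bar R) :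
  (forall n r e, (0 <= c n r e)%E) ->
  (forall (n : nat) (r r' e e' : R), 0 < e -> `|r - r'| + e <= e' -> (c n r e <= c n r' e')%E) ->
  forall (r r' e e' : R), 0 < e -> `|r - r'| + e <= e' -> (gfun c r e <= gfun c r' e')%E.
Proof.
move=> c0 cle r r' e e' e0 ee'.
apply: limn_esup_le => n.
apply: gt0_ler_poweR; first by rewrite invr_ge0.
- by rewrite in_itv /= c0 leey.
- by rewrite in_itv /= c0 leey.
exact: cle.
Qed.

Lemma usc_b (c : nat -> R -> R -> \bar R) :
  (forall n r e, (0 <= c n r e)%E) ->
  (forall (n : nat) (r r' e e' : R), 0 < e -> `|r - r'| + e <= e' -> (c n r e <= c n r' e')%E) ->
  @upper_semicontinuous R (b_of c).
Proof.
move=> c0 cle.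
have gle := @gfun_le c c0 cle.
have bE r : b_of c r = ereal_inf (gfun c r @` [set` Interval (BRight (0:R)) (BLeft 1)]).
  rewrite /b_of; apply: cvg_lim => //.
  apply: (nondecreasing_at_right_cvge (BLeft (1:R))) => //.
    by rewrite bnd_simp.
  move=> x y xI _ xy; move: xI; rewrite in_itv /= => /andP[x0 _].
  apply: gle => //; by rewrite subrr normr0 add0r.
move=> x a; rewrite bE => /ereal_inf_lt [z [e]].
rewrite /= in_itv /= => /andP[e0 e1] <- ga.
apply/nbhs_ballP; exists (e/2); first by rewrite /= divr_gt0.
move=> y; rewrite /ball /= => xy.
rewrite bE; apply: le_lt_trans ga.
apply: (@le_trans _ _ (gfun c y (e/2))).
  apply: ereal_inf_lbound; exists (e/2) => //; rewrite /= in_itv /=; apply/andP; split; first by rewrite divr_gt0.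
  by apply: lt_trans e1; rewrite ltr_pdivrMr // ltr_pMr // ltr1n.
apply: gle; first by rewrite divr_gt0.
rewrite distrC; apply: (@le_trans _ _ (e/2 + e/2)); last by rewrite -splitr.
by rewrite lerD2r; exact: ltW.
Qed.

Lemma interval_mono (r r' e e' : R) (n : nat) (X : \bar R) : `|r - r'| + e <= e' ->
  (((r - e) * n%:R)%:E <= X)%E -> (X <= ((r + e) * n%:R)%:E)%E ->
  (((r' - e') * n%:R)%:E <= X)%E /\ (X <= ((r' + e') * n%:R)%:E)%E.
Proof.
move=> h l u.
have h1 : r' - r <= `|r - r'| by rewrite distrC ler_norm.
have h2 : r - r' <= `|r - r'| by rewrite ler_norm.
have n0 : 0 <= n%:R :> R by [].
split.
  apply: le_trans l; rewrite lee_fin ler_wpM2r //; lra.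
apply: le_trans u _; rewrite lee_fin ler_wpM2r //; lra.
Qed.
End S.

Theorem proposition6p2 (R : realType) (G : pgraph) (o : vtx G) :
  inS R G ->
  upper_semicontinuous (b_bond R (vtx G) (@gadj G) (@gcyc G) o) /\
  upper_semicontinuous (b_site R (vtx G) (@gadj G) (@gcyc G) o).
Proof.
move=> _; split; apply: usc_b.
- by move=> *; apply: ecount_ge0.
- move=> n r r' e e' e0 h; apply: ecount_le => -[P dP] /= [H1 H2 H3 H4].
  have [H3' H4'] := @interval_mono R _ _ _ _ _ _ h H3 H4; by split.
- by move=> *; apply: ecount_ge0.
- move=> n r r' e e' e0 h; apply: ecount_le => -[P dP] /= [H1 H2 H3 H4].
  have [H3' H4'] := @interval_mono R _ _ _ _ _ _ h H3 H4; by split.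
Qed.
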